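(* Let $n\ge 1$ and $m\ge 2$ be integers with $m\nmid n$, let $\ell=\lfloor n/m\rfloor$, let $k$ be an integer with $1\le k\le \ell$, let $s=\lfloor \ell/k\rfloor$, and let $f=\theta_{m,0}+\theta_{m,k}$. Then the order of $f$ under composition is $2^{\lceil\log_2\frac{\ell+1}{k}\rceil}$, and the compositional inverse of $f$ is $$f^{-1}=\theta_{m,0}+\theta_{m,k}+\theta_{m,2k}+\cdots+\theta_{m,sk}.$$ Moreover, the algebraic degree of $f$ is $(m-1)k+1$ and the algebraic degree of $f^{-1}$ is $(m-1)sk+1$.
   Context: For $x=(x_0,\dots,x_{n-1})\in\mathbb{F}_2^n$, indices of coordinates are taken modulo $n$. For a nonnegative integer $k$, the map $\theta_{m,k}\colon\mathbb{F}_2^n\to\mathbb{F}_2^n$ is defined by $\theta_{m,k}(x)=y$ with $y_i=x_{i+mk}\prod_{1\le j\le mk-1,\ m\nmid j}(x_{i+j}+1)$ for $i\in\{0,\dots,n-1\}$; $\theta_{m,0}$ is the identity map. Sums of maps are pointwise sums. The order of $f$ is the least $r\ge1$ with $f^{r}$ (the $r$-fold composition) equal to the identity. The algebraic degree of a map $\mathbb{F}_2^n\to\mathbb{F}_2^n$ is the maximum degree of the algebraic normal forms of its coordinate functions. *)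

(* Defs.v *)
(* Vectors of F_2^n are n.-tuples of booleans; F_2 = bool,
   addition = xorb (+), multiplication = andb. *)
From mathcomp Require Import all_boot.
Set Implicit Arguments. Unset Strict Implicit. Unset Printing Implicit Defensive.

Definition vec (n : nat) := n.-tuple bool.

Definition coord n (x : vec n) (j : nat) : bool := nth false x (j %% n).

(* theta_{m,k}(x)_i = x_{i+mk} * prod_{1<=j<=mk-1, m does not divide j} (x_{i+j}+1) *)
Definition theta n (m k : nat) (x : vec n) : vec n :=
  [tuple coord x (i + m * k) &&
         \big[andb/true]_(1 <= j < m * k | ~~ (m %| j)) ~~ coord x (i + j)
   | i < n].

Definition theta_sum n (m k s : nat) (x : vec n) : vec n :=
  [tuple \big[addb/false]_(t < s.+1) tnth (theta m (t * k) x) i | i < n].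

Definition fmap n (m k : nat) (x : vec n) : vec n :=
  [tuple tnth (theta m 0 x) i (+) tnth (theta m k x) i | i < n].

Definition has_order (T : Type) (f : T -> T) (r : nat) : Prop :=
  0 < r /\ iter r f =1 id /\ (forall r', 0 < r' < r -> ~ (iter r' f =1 id)).

(* ceiling of log_2 (a / b) for positive a, b : the least e with a/b <= 2^e,
   i.e. the least e with ceil(a/b) <= 2^e, which is up_log 2 (ceil(a/b)) *)
Definition ceil_div (a b : nat) : nat := (a + b - 1) %/ b.
Definition ceil_log2_ratio (a b : nat) : nat := up_log 2 (ceil_div a b).

(* Algebraic normal form: for g : F_2^n -> F_2, the ANF coefficient of the
   monomial prod_{i in S} x_i (Moebius transform), degree of the ANF, and
   the algebraic degree of a vectorial map (max over coordinate functions). *)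
Definition indic n (T : {set 'I_n}) : vec n := [tuple (i \in T) | i < n].
Definition anf_coef n (g : vec n -> bool) (S : {set 'I_n}) : bool :=
  \big[addb/false]_(T : {set 'I_n} | T \subset S) g (indic T).
Definition anf_degree n (g : vec n -> bool) : nat :=
  \max_(S : {set 'I_n} | anf_coef g S) #|S|.
Definition alg_degree n (F : vec n -> vec n) : nat :=
  \max_(i < n) anf_degree (fun x => tnth (F x) i).

(* Main.v *)
Require Import Defs.
From mathcomp Require Import all_boot.
From mathcomp Require Import zify.
Set Implicit Arguments. Unset Strict Implicit. Unset Printing Implicit Defensive.


Section Dyn.
Variables n m k : nat.
Hypotheses (n0 : 0 < n) (m2 : 1 < m) (mn : ~~ (m %| n)) (k0 : 0 < k).

Definition Pb (x : vec n) i u := \big[andb/true]_(1 <= j < m * u | ~~ (m %| j)) ~~ coord x (i + j).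
Definition goodb (x : vec n) i u := coord x (i + m * u) && Pb x i u.
Definition Pp (x : vec n) i u := forall j, 0 < j -> j < m * u -> ~~ (m %| j) -> coord x (i + j) = false.

Lemma PbP x i u : reflect (Pp x i u) (Pb x i u).
Proof.
rewrite /Pb big_all_cond; apply: (iffP allP) => H.
  move=> j j0 ju mj; have := H j; rewrite mem_index_iota j0 ju => /(_ isT) /=.
  by rewrite mj /= => /negbTE.
move=> j; rewrite mem_index_iota => /andP[j0 ju] /=; apply/implyP => mj.
by rewrite H.
Qed.

Lemma goodP x i u : goodb x i u = true <-> (Pp x i u /\ coord x (i + m * u) = true).
Proof.
rewrite /goodb; split.
  by case/andP => -> /PbP.
by case=> /PbP -> ->.
Qed.

Lemma coord_eq (x : vec n) a b : a = b -> coord x a = coord x b.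
Proof. by move->. Qed.

Lemma coord_modn (x : vec n) a : coord x (a %% n) = coord x a.
Proof. by rewrite /coord modn_mod. Qed.

Lemma coord_addn (x : vec n) a : coord x (a + n) = coord x a.
Proof. by rewrite /coord modnDr. Qed.

Lemma goodb_mod x p u : goodb x (p %% n) u = goodb x p u.
Proof.
rewrite /goodb /Pb; congr andb.
  by rewrite /coord modnDml.
by apply: eq_bigr => j _; rewrite /coord modnDml.
Qed.

Lemma Pp_mono x i u v : v <= u -> Pp x i u -> Pp x i v.
Proof.
move=> vu H j j0 jv mj; apply: H => //; apply: (leq_trans jv); exact: leq_mul.
Qed.

Lemma ndvd_add j a : ~~ (m %| j) -> ~~ (m %| j + m * a).
Proof. by move=> mj; rewrite addnC dvdn_addr ?dvdn_mulr. Qed.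

Lemma Pp_split x i a b : Pp x i (a + b) <-> (Pp x i a /\ Pp x (i + m * a) b).
Proof.
split.
  move=> H; split; first by apply: Pp_mono H; rewrite leq_addr.
  move=> j j0 jb mj; rewrite -addnA; apply: H.
  - by rewrite addn_gt0 j0 orbT.
  - by rewrite mulnDr ltn_add2l.
  - by rewrite addnC ndvd_add.
move=> [Ha Hb] j j0 jab mj.
case: (ltngtP j (m * a)) => ja.
- exact: Ha.
- have -> : i + j = i + m * a + (j - m * a) by lia.
  apply: Hb; first by lia.
    rewrite mulnDr in jab; lia.
  by rewrite -(dvdn_addr _ (dvdn_mulr a (dvdnn m))) subnKC // ltnW.
- by move: mj; rewrite ja dvdn_mulr.
Qed.

Lemma good_split x i a b : goodb x i a -> goodb x (i + m * a) b -> goodb x i (a + b).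
Proof.
move=> /goodP [Ha _] /goodP [Hb Hc]; apply/goodP; split.
  by apply/Pp_split.
by rewrite -Hc mulnDr addnA.
Qed.

Lemma good_bound x i u : goodb x i u -> m * u < n.
Proof.
move=> /goodP [Hp Hc]; rewrite ltnNge; apply/negP => nu.
case: (ltngtP (m * u) n) => [lt|nlt|eq]; first by rewrite ltnNge nu in lt.
  2: {
  by move: mn; rewrite -eq dvdn_mulr. }
have := Hp (m * u - n); rewrite subn_gt0 nlt => /(_ isT).
rewrite ltn_subrL n0 (leq_trans _ nlt) // => /(_ isT).
rewrite dvdn_subr ?(ltnW nlt) ?dvdn_mulr // mn => /(_ isT).
rewrite -coord_addn.
have -> : i + (m * u - n) + n = i + m * u by lia.
by rewrite Hc.
Qed.

Lemma good_split' x i a b : Pp x i a -> goodb x (i + m * a) b -> goodb x i (a + b).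
Proof.
move=> Ha /goodP [Hb Hc]; apply/goodP; split.
  by apply/Pp_split.
by rewrite -Hc mulnDr addnA.
Qed.

Lemma coord_tnth (y : vec n) p : coord y p = tnth y (Ordinal (ltn_pmod p n0)).
Proof. by rewrite /coord (tnth_nth false). Qed.

Lemma tnth_theta x (i : 'I_n) u : tnth (theta m u x) i = goodb x i u.
Proof. by rewrite tnth_mktuple. Qed.

Lemma goodb0 x p : goodb x p 0 = coord x p.
Proof. by rewrite /goodb /Pb muln0 addn0 big_geq // andbT. Qed.

Lemma coord_f x p : coord (fmap m k x) p = coord x p (+) goodb x p k.
Proof.
by rewrite coord_tnth tnth_mktuple !tnth_theta /= !goodb_mod goodb0.
Qed.

Lemma coord_g s x p : coord (theta_sum m k s x) p = \big[addb/false]_(t < s.+1) goodb x p (t * k).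
Proof.
rewrite coord_tnth tnth_mktuple; apply: eq_bigr => t _.
by rewrite tnth_theta /= goodb_mod.
Qed.

Lemma ndvd_sub a j : j <= m * a -> ~~ (m %| j) -> ~~ (m %| m * a - j).
Proof. by move=> ja mj; rewrite dvdn_subr ?dvdn_mulr. Qed.

Lemma ndvd_ne a j : ~~ (m %| j) -> j != m * a.
Proof. by move=> mj; apply/eqP => e; move: mj; rewrite e dvdn_mulr. Qed.

Lemma noext x e : (forall w, 0 < w -> goodb x e w = false) ->
  forall w, 0 < w -> goodb (fmap m k x) e w = false.
Proof.
move=> Hx w w0; apply/negbTE/negP => /goodP [Hpy Hcy].
have H : forall d j, m * w - j = d -> 0 < j -> j < m * w -> ~~ (m %| j) ->
    coord x (e + j) = false.
  elim/ltn_ind=> d IH j hd j0 jw mj.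
  apply/negbTE/negP => cx.
  have gx : goodb x (e + j) k.
    by have := Hpy j j0 jw mj; rewrite coord_f cx; case: (goodb x (e + j) k).
  move/goodP: gx => [Pj cj].
  case: (ltnP (j + m * k) (m * w)) => h.
    have := IH (m * w - (j + m * k)) _ (j + m * k) erefl _ h (ndvd_add k mj).
    rewrite addnA cj => /(_ _ _) => H; suff: true = false by [].
    apply: H; lia.
  have ne := ndvd_ne k mj.
  have hlt : m * w < j + m * k.
    rewrite ltn_neqAle h andbT; apply/eqP => ee.
    by move: mj; rewrite -(dvdn_addr _ (dvdn_mulr k (dvdnn m))) addnC -ee dvdn_mulr.
  have cw : coord x (e + m * w) = false.
    have := Pj (m * w - j) _ _ (ndvd_sub (ltnW jw) mj).
    have -> : e + j + (m * w - j) = e + m * w by lia.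
    move=> H; apply: H; lia.
  have : goodb x (e + m * w) k by move: Hcy; rewrite coord_f cw.
  move=> /goodP [Pw _].
  have := Pw (j + m * k - m * w) _ _ _.
  have -> : e + m * w + (j + m * k - m * w) = e + j + m * k by lia.
  rewrite cj => H; suff: true = false by [].
  apply: H; try lia.
  by rewrite dvdn_subl ?dvdn_mulr ?(ltnW hlt) // ndvd_add.
have Hpx : Pp x e w by move=> j j0 jw mj; exact: (H _ j erefl).
move: Hcy; rewrite coord_f; case cx: (coord x (e + m * w)) => /=.
  move=> _; have : goodb x e w by apply/goodP.
  by rewrite Hx.
move=> gk; have := good_split' Hpx gk; rewrite Hx //; lia.
Qed.

Definition E x i L := goodb x i L /\ forall w, 0 < w -> goodb x (i + m * L) w = false.
Definition NG x i := forall w, goodb x i w = false.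

Lemma E_f x i L : E x i L -> E (fmap m k x) i L.
Proof.
move=> [/goodP [PL cL] H2]; split; last exact: noext.
apply/goodP; split; last by rewrite coord_f cL H2.
move=> j j0 jL mj; rewrite coord_f PL //=.
apply/negbTE/negP => /goodP [Pj cj].
case: (ltnP (j + m * k) (m * L)) => h.
  by move: cj; rewrite -addnA PL // ?ndvd_add //; lia.
have hlt : m * L < j + m * k.
  rewrite ltn_neqAle h andbT; apply/eqP => ee.
  by move: mj; rewrite -(dvdn_addr _ (dvdn_mulr k (dvdnn m))) addnC -ee dvdn_mulr.
have := Pj (m * L - j) _ _ (ndvd_sub (ltnW jL) mj).
have -> : i + j + (m * L - j) = i + m * L by lia.
rewrite cL => H; suff: true = false by []; apply: H; lia.
Qed.

Lemma E1 x i L : E x i L -> forall t, goodb x i t = (t <= L) && coord x (i + m * t).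
Proof.
move=> [gL H2] t; case: (leqP t L) => h /=.
  rewrite /goodb; suff -> : Pb x i t = true by rewrite andbT.
  apply/PbP.
  by move/goodP: gL => [PL _]; apply: Pp_mono PL.
apply/negbTE/negP => /goodP [Pt ct].
have e1 : t = L + (t - L) by lia.
rewrite e1 in Pt ct; move/Pp_split: Pt => [_ P2].
have g : goodb x (i + m * L) (t - L).
  by apply/goodP; split => //; rewrite -addnA -mulnDr.
by rewrite H2 ?subn_gt0 in g.
Qed.

Lemma E2 x i L u : E x i L -> u <= L -> E x (i + m * u) (L - u).
Proof.
move=> [gL H2] uL.
have eq1 : i + m * u + m * (L - u) = i + m * L by rewrite -addnA -mulnDr subnKC.
split; last by rewrite eq1.
move/goodP: gL => [PL cL]; apply/goodP; split; last by rewrite eq1.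
have PL' : Pp x i (u + (L - u)) by rewrite subnKC.
by case/Pp_split: PL'.
Qed.

Lemma NG_f x i : NG x i -> NG (fmap m k x) i /\ coord (fmap m k x) i = coord x i.
Proof.
move=> H; have ci : coord (fmap m k x) i = coord x i by rewrite coord_f H addbF.
split => // -[|w]; first by rewrite goodb0 ci -goodb0 H.
by apply: noext => // w' _; apply: H.
Qed.

Lemma dich x i : NG x i \/ exists L, E x i L.
Proof.
have ub : forall u, goodb x i u -> u <= n.
  move=> u /good_bound h; apply: ltnW; apply: leq_ltn_trans h; apply: leq_pmull; lia.
case: (boolP [exists w : 'I_n.+1, goodb x i w]).
  move=> /existsP [w gw]; right.
  have ex : exists u, goodb x i u by exists w.
  case: (ex_maxnP ex ub) => L gL maxL; exists L; split => // w' w0.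
  apply/negbTE/negP => g'; have := maxL _ (good_split gL g'); lia.
move=> /existsPn H; left => w; apply/negbTE/negP => gw.
have := H (Ordinal (leq_ltn_trans (ub _ gw) (ltnSn n))); by rewrite /= gw.
Qed.

Definition A (d L : nat) (b : nat -> bool) : nat -> bool :=
  fun u => b u (+) ((u + d <= L) && b (u + d)).

Lemma chain_f x i L : E x i L -> forall u, u <= L ->
  coord (fmap m k x) (i + m * u) = A k L (fun u => coord x (i + m * u)) u.
Proof.
move=> HE u uL; rewrite coord_f (E1 (E2 HE uL)) /A.
have -> : (k <= L - u) = (u + k <= L) by apply/idP/idP; lia.
by rewrite mulnDr addnA.
Qed.

Lemma iter_chain x i L : E x i L -> forall r, E (iter r (@fmap n m k) x) i L /\
  forall u, u <= L -> coord (iter r (@fmap n m k) x) (i + m * u) =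
                      iter r (A k L) (fun u => coord x (i + m * u)) u.
Proof.
move=> HE; elim=> [|r [IE IH]] //=; split; first exact: E_f.
move=> u uL; rewrite (chain_f IE uL) /A.
case: (leqP (u + k) L) => h /=; rewrite !IH //.
Qed.

Lemma Adef d L b u : A d L b u = b u (+) ((u + d <= L) && b (u + d)).
Proof. by []. Qed.

Lemma A_pow L j b u : u <= L -> iter (2 ^ j) (A k L) b u = A (k * 2 ^ j) L b u.
Proof.
elim: j b u => [|j IH] b u uL; first by rewrite expn0 muln1.
have -> : 2 ^ j.+1 = 2 ^ j + 2 ^ j by rewrite expnS mul2n addnn.
rewrite iterD IH //.
set d := k * 2 ^ j.
have -> : k * (2 ^ j + 2 ^ j) = d + d by rewrite mulnDr.
rewrite Adef.
case h1: (u + d <= L) => /=.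
  rewrite !IH // !Adef h1 -addnA.
  by case: (u + (d + d) <= L); case: (b u); case: (b (u + d)); case: (b (u + (d + d))).
rewrite IH // Adef h1 /= Adef.
have -> : (u + (d + d) <= L) = false by apply/negbTE; move/negbT: h1; lia.
by rewrite !addbF.
Qed.

Lemma iter_NG x i : NG x i -> forall r, NG (iter r (@fmap n m k) x) i /\
  coord (iter r (@fmap n m k) x) i = coord x i.
Proof.
move=> H; elim=> [|r [IN IC]] //=.
by have [N2 C2] := NG_f IN; split => //; rewrite C2 IC.
Qed.

Lemma E_bound x i L : E x i L -> L <= n %/ m.
Proof.
move=> [g _]; have := good_bound g; rewrite leq_divRL; lia.
Qed.

Lemma tnth_coord (y : vec n) (i : 'I_n) : tnth y i = coord y i.
Proof. by rewrite /coord modn_small // (tnth_nth false). Qed.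

Lemma f_period R : n %/ m < k * 2 ^ R -> forall x, iter (2 ^ R) (@fmap n m k) x = x.
Proof.
move=> hR x; apply: eq_from_tnth => i; rewrite !tnth_coord.
case: (dich x i) => [HN|[L HE]]; first by have [_ ->] := iter_NG HN (2 ^ R).
have [_ H] := iter_chain HE (2 ^ R).
have := H 0 (leq0n _); rewrite muln0 addn0 => ->.
rewrite A_pow // /A add0n.
have -> : (k * 2 ^ R <= L) = false by apply/negbTE; have := E_bound HE; lia.
by rewrite addbF muln0 addn0.
Qed.

Lemma f_not_period j : k * 2 ^ j <= n %/ m -> exists x, iter (2 ^ j) (@fmap n m k) x <> x.
Proof.
move=> hj; set K := k * 2 ^ j.
pose x0 : vec n := [tuple (val i0 == 0) | i0 < n].
have cx : forall p, coord x0 p = (p %% n == 0).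
  by move=> p; rewrite coord_tnth tnth_mktuple.
have mK : m * K < n.
  have : m * K <= n by rewrite mulnC -leq_divRL; lia.
  rewrite leq_eqVlt => /orP [/eqP e|//].
  by move: mn; rewrite -e dvdn_mulr.
set i := n - m * K.
have HE : E x0 i K.
  split.
    apply/goodP; split; last by rewrite cx subnK ?modnn // ltnW.
    move=> j' j0 jK _; rewrite cx modn_small; last by lia.
    by apply/negbTE; lia.
  move=> w w0; apply/negbTE/negP => g; have mw := good_bound g.
  move/goodP: g => [_]; rewrite cx subnK ?(ltnW mK) // addnC modnDr modn_small //.
  by rewrite muln_eq0 => /orP [] /eqP; lia.
exists x0 => He.
have [_ H] := iter_chain HE (2 ^ j).
have := H 0 (leq0n _); rewrite muln0 addn0 He A_pow // /A add0n leqnn /=.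
have -> : coord x0 (i + m * K) = true by rewrite cx subnK ?modnn // ltnW.
by rewrite muln0 addn0; case: (coord x0 i).
Qed.

Lemma telescope L (b : nat -> bool) S :
  \big[addb/false]_(t < S.+1) ((t * k <= L) && (b (t * k) (+) ((t * k + k <= L) && b (t * k + k))))
  = b 0 (+) ((S.+1 * k <= L) && b (S.+1 * k)).
Proof.
elim: S => [|S IH].
  by rewrite big_ord1 /= mul1n add0n.
rewrite big_ord_recr /= IH.
have -> : S.+2 * k = S.+1 * k + k by rewrite mulSn addnC.
case h1: (S.+1 * k + k <= L).
  have -> : S.+1 * k <= L by apply: leq_trans h1; rewrite leq_addr.
  by case: (b 0); case: (b (S.+1 * k)); case: (b (S.+1 * k + k)).
by case: (S.+1 * k <= L); case: (b 0); case: (b (S.+1 * k)).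
Qed.

Lemma cancel_fg : cancel (@fmap n m k) (@theta_sum n m k (n %/ m %/ k)).
Proof.
move=> x; apply: eq_from_tnth => i; rewrite !tnth_coord coord_g.
case: (dich x i) => [HN|[L HE]].
  have [N2 _] := NG_f HN.
  rewrite big1 => [|t _]; last exact: N2.
  by have := HN 0; rewrite goodb0.
have HE' := E_f HE.
pose b := fun u => coord x (i + m * u).
rewrite (eq_bigr (fun t : 'I_ _ => (t * k <= L) && (b (t * k) (+) ((t * k + k <= L) && b (t * k + k))))).
  rewrite telescope.
  have -> : ((n %/ m %/ k).+1 * k <= L) = false.
    apply/negbTE; rewrite -ltnNge; apply: leq_ltn_trans (E_bound HE) _.
    exact: ltn_ceil.
  by rewrite addbF /b muln0 addn0.
move=> t _; rewrite (E1 HE'); case h: (t * k <= L) => //=.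
by rewrite (chain_f HE h).
Qed.

End Dyn.


Lemma iter_addb c : iter c (addb true) false = odd c.
Proof. by elim: c => //= c ->. Qed.

Lemma big_addb_odd (X : finType) (P Q : pred X) :
  \big[addb/false]_(x | P x) Q x = odd #|[pred x | P x && Q x]|.
Proof.
rewrite (bigID Q) /= [X in _ (+) X]big1 ?addbF; last by move=> x /andP[_ /negbTE].
rewrite (eq_bigr (fun _ => true)); last by move=> x /andP[_ ->].
by rewrite big_const iter_addb.
Qed.

Lemma cnt_interval0 (X : finType) (A0 U : {set X}) : A0 \subset U ->
  odd #|[set T : {set X} | (A0 \subset T) && (T \subset U)]| = (A0 == U).
Proof.
move=> AU.
have -> : [set T : {set X} | (A0 \subset T) && (T \subset U)] =
          (fun C => A0 :|: C) @: powerset (U :\: A0).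
  apply/setP => T; rewrite inE; apply/idP/imsetP.
    case/andP => AT TU; exists (T :\: A0); first by rewrite powersetE setSD.
    apply/setP => x; rewrite !inE; case: (boolP (x \in A0)) => //= xA.
    by rewrite (subsetP AT).
  case=> C; rewrite powersetE => CU ->; rewrite subsetUl /= subUset AU /=.
  exact: subset_trans CU (subsetDl _ _).
rewrite card_in_imset; last first.
  move=> C1 C2; rewrite !powersetE => C1U C2U e.
  apply/setP => x; have := congr1 (fun S : {set X} => x \in S) e; rewrite !inE /=.
  case: (boolP (x \in A0)) => //= xA.
  have h1 : x \notin C1.
    by apply/negP => /(subsetP C1U); rewrite inE xA.
  have h2 : x \notin C2.
    by apply/negP => /(subsetP C2U); rewrite inE xA.
  by rewrite (negbTE h1) (negbTE h2).
rewrite card_powerset oddX orbF cards_eq0 setD_eq0 eqEsubset AU.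
by [].
Qed.

Lemma cnt_interval (X : finType) (A0 U : {set X}) :
  odd #|[set T : {set X} | (A0 \subset T) && (T \subset U)]| = (A0 == U).
Proof.
case: (boolP (A0 \subset U)) => AU; first exact: cnt_interval0.
have -> : [set T : {set X} | (A0 \subset T) && (T \subset U)] = set0.
  apply/setP => T; rewrite !inE; apply/negbTE/negP => /andP [h1 h2].
  by move/negP: AU; apply; exact: subset_trans h2.
rewrite cards0 /=; apply/esym/negbTE/negP => /eqP e; by move: AU; rewrite e subxx.
Qed.

Section Deg.
Variables n m : nat.
Hypotheses (n0 : 0 < n) (m2 : 1 < m) (mn : ~~ (m %| n)).
Variable i : 'I_n.

Definition ordp p : 'I_n := Ordinal (ltn_pmod p n0).
Definition aa t := ordp (i + m * t).
Definition DD t := [set j : 'I_(m * t) | (0 < val j) && ~~ (m %| val j)].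
Definition BB t := (fun j : 'I_(m * t) => ordp (i + val j)) @: DD t.

Lemma coord_indic T p : coord (indic T) p = (ordp p \in T).
Proof. by rewrite (coord_tnth n0) tnth_mktuple. Qed.

Lemma goodb_indic T t : goodb m (indic T) i t = (aa t \in T) && [disjoint BB t & T].
Proof.
rewrite /goodb coord_indic; congr andb; rewrite disjoint_subset.
apply/PbP/subsetP.
  move=> H x /imsetP [j]; rewrite inE => /andP [j0 mj] ->.
  by rewrite inE /= -coord_indic H.
move=> H j j0 jt mj; rewrite coord_indic; apply/negbTE.
have : ordp (i + j) \in BB t.
  by apply/imsetP; exists (Ordinal jt); rewrite // inE /= j0.
by move/H; rewrite inE.
Qed.

Lemma anf_goodb t S : anf_coef (fun x : vec n => goodb m x i t) S = (S :\: BB t == [set aa t]).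
Proof.
rewrite /anf_coef; under eq_bigr => T _ do rewrite goodb_indic.
rewrite big_addb_odd eq_sym -cnt_interval; congr odd; apply: eq_card => T.
rewrite !inE sub1set subsetD disjoint_sym.
by case: (aa t \in T); case: (T \subset S).
Qed.

Lemma ordp_inj a b c : b < n -> c < n -> ordp (a + b) = ordp (a + c) -> b = c.
Proof.
move=> bn cn /(congr1 val) /= /eqP; rewrite eqn_modDl !modn_small //; exact/eqP.
Qed.

Lemma aa_notin t : m * t < n -> aa t \notin BB t.
Proof.
move=> mt; apply/imsetP => -[j _ e].
have := ordp_inj mt (ltn_trans (ltn_ord j) mt) e.
by move=> ej; have := ltn_ord j; rewrite -ej ltnn.
Qed.

Lemma cnt_nonmult t : \sum_(0 <= j < m * t | (0 < j) && ~~ (m %| j)) 1 = (m - 1) * t.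
Proof.
elim: t => [|t IH]; first by rewrite !muln0 big_geq.
rewrite mulnS addnC (@big_cat_nat _ _ _ (m * t)) //=; last by rewrite leq_addr.
rewrite IH -{1}(add0n (m * t)) big_addn addKn big_ltn_cond; last by lia.
rewrite /= add0n dvdn_mulr ?andbF //= ?dvdnn //.
rewrite big_nat_cond (eq_bigl (fun j => (1 <= j < m) && true)); last first.
  move=> j; case h: (1 <= j < m) => //=.
  rewrite addn_gt0 (_ : 0 < j) //=; last by lia.
  rewrite addnC dvdn_addr ?dvdn_mulr //.
  apply/negP => /dvdn_leq; lia.
rewrite -big_nat_cond sum_nat_const_nat muln1 mulnS addnC.
by [].
Qed.

Lemma card_BB t : m * t < n -> #|BB t| = (m - 1) * t.
Proof.
move=> mt; rewrite card_in_imset; last first.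
  move=> j1 j2 _ _ e; apply: val_inj.
  exact: ordp_inj (ltn_trans (ltn_ord j1) mt) (ltn_trans (ltn_ord j2) mt) e.
rewrite -cnt_nonmult -sum1_card big_mkord; apply: eq_bigl => j.
by rewrite inE.
Qed.

Definition UU t := aa t |: BB t.

Lemma card_UU t : m * t < n -> #|UU t| = (m - 1) * t + 1.
Proof. by move=> mt; rewrite cardsU1 aa_notin // card_BB // addnC. Qed.

Lemma anf_sum k s S :
  anf_coef (fun x : vec n => \big[addb/false]_(t < s.+1) goodb m x i (t * k)) S =
  \big[addb/false]_(t < s.+1) (S :\: BB (t * k) == [set aa (t * k)]).
Proof.
rewrite /anf_coef exchange_big; apply: eq_bigr => t _.
by rewrite -(anf_goodb (t * k) S).
Qed.

Lemma sub_of_coef S t : S :\: BB t == [set aa t] -> S \subset UU t.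
Proof.
move=> ht; apply/subsetP => x xS; rewrite /UU !inE.
case: (boolP (x \in BB t)) => xB; first by rewrite orbT.
have : x \in S :\: BB t by rewrite inE xB xS.
by rewrite (eqP ht) inE => ->.
Qed.

Lemma deg_sum k s : 0 < k -> m * (s * k) < n ->
  anf_degree (fun x : vec n => \big[addb/false]_(t < s.+1) goodb m x i (t * k)) = (m - 1) * (s * k) + 1.
Proof.
move=> k0 msk.
have mtk : forall t, t <= s -> m * (t * k) < n.
  move=> t ts; apply: leq_ltn_trans msk; apply: leq_mul => //; exact: leq_mul.
rewrite /anf_degree; apply/eqP; rewrite eqn_leq; apply/andP; split.
  apply/bigmax_leqP => S; rewrite anf_sum => cS.
  have [t ht] : exists t : 'I_s.+1, S :\: BB (t * k) == [set aa (t * k)].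
    case: (boolP [exists t : 'I_s.+1, S :\: BB (t * k) == [set aa (t * k)]]) => [/existsP //|/existsPn H].
    by move: cS; rewrite big1 // => t _; exact/negbTE/H.
  have ts : t <= s by rewrite -ltnS.
  apply: leq_trans (subset_leq_card (sub_of_coef ht)) _.
  rewrite card_UU ?mtk // leq_add2r; apply: leq_mul => //; exact: leq_mul.
have cU : anf_coef (fun x : vec n => \big[addb/false]_(t < s.+1) goodb m x i (t * k)) (UU (s * k)).
  rewrite anf_sum big_ord_recr /= big1 => [|t _].
    apply/eqP/setP => x; rewrite !inE; case: (x =P aa (s * k)) => [->|] /=.
      by rewrite (aa_notin msk).
    by case: (x \in BB _).
  apply/negbTE/negP => /sub_of_coef /subset_leq_card.
  have ts : t < s := ltn_ord t.
  rewrite !card_UU ?mtk //; last exact: ltnW.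
  have : (m - 1) * (t * k) < (m - 1) * (s * k).
    by rewrite ltn_pmul2l ?subn_gt0 // ltn_pmul2r.
  lia.
apply: leq_trans (leq_bigmax_cond _ cU).
by rewrite card_UU.
Qed.

End Deg.

Lemma anf_degree_ext n (g1 g2 : vec n -> bool) : g1 =1 g2 -> anf_degree g1 = anf_degree g2.
Proof.
move=> e; rewrite /anf_degree /anf_coef; apply: eq_bigl => S.
by apply: eq_bigr => T _; rewrite e.
Qed.

Lemma bigmax_const n (c : nat) : 0 < n -> \max_(i < n) c = c.
Proof.
move=> n0; apply/eqP; rewrite eqn_leq; apply/andP; split.
  by apply/bigmax_leqP.
by rewrite (bigD1 (Ordinal n0)) //= leq_maxl.
Qed.

Lemma alg_deg_sum n m k s : 0 < n -> 1 < m -> ~~ (m %| n) -> 0 < k -> m * (s * k) < n ->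
  alg_degree (@theta_sum n m k s) = (m - 1) * (s * k) + 1.
Proof.
move=> n0 m2 mn k0 msk; rewrite /alg_degree.
rewrite (eq_bigr (fun _ => (m - 1) * (s * k) + 1)); first exact: bigmax_const.
move=> i _; rewrite -(@deg_sum n m n0 m2 mn i k s k0 msk); apply: anf_degree_ext => x.
by rewrite tnth_mktuple; apply: eq_bigr => t _; rewrite tnth_theta.
Qed.

Lemma alg_deg_f n m k : 0 < n -> 1 < m -> ~~ (m %| n) -> 0 < k -> m * k < n ->
  alg_degree (@fmap n m k) = (m - 1) * k + 1.
Proof.
move=> n0 m2 mn k0 mk.
rewrite -[in RHS](mul1n k) -(alg_deg_sum n0 m2 mn k0) ?mul1n //.
rewrite /alg_degree; apply: eq_bigr => i _; apply: anf_degree_ext => x.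
rewrite !tnth_mktuple !big_ord_recr big_ord0 /= !tnth_theta mul0n mul1n.
by [].
Qed.


Lemma iter_mul T (g : T -> T) a q : iter a g =1 id -> iter (q * a) g =1 id.
Proof.
move=> Ha; elim: q => [|q IH] x //=.
by rewrite mulSn iterD IH Ha.
Qed.

Lemma iter_gcd T (g : T -> T) a b : iter a g =1 id -> iter b g =1 id -> iter (gcdn a b) g =1 id.
Proof.
elim/ltn_ind: a b => a IH b Ha Hb; rewrite gcdnE.
case: eqP => [a0|/eqP a0]; first by [].
apply: IH => //; first by rewrite ltn_mod lt0n.
move=> x; have := Hb x; rewrite {1}(divn_eq b a) iterD (iter_mul _ Ha).
by [].
Qed.

Theorem theorem3 (n m k : nat) :
  1 <= n -> 2 <= m -> ~~ (m %| n) ->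
  1 <= k <= n %/ m ->
  let l := n %/ m in
  let s := l %/ k in
  let f := @fmap n m k in
  let finv := @theta_sum n m k s in
  has_order f (2 ^ ceil_log2_ratio l.+1 k) /\
  cancel f finv /\ cancel finv f /\
  alg_degree f = (m - 1) * k + 1 /\
  alg_degree finv = (m - 1) * s * k + 1.
Proof.
move=> n0 m2 mn /andP [k0 kl] l s f finv.
have ml : m * l < n.
  have : m * l <= n by rewrite /l mulnC leq_trunc_div.
  rewrite leq_eqVlt => /orP [/eqP e|//].
  by move: mn; rewrite -e dvdn_mulr.
have sk : s * k <= l by rewrite /s leq_trunc_div.
have mk : m * k < n by apply: leq_ltn_trans ml; rewrite leq_mul2l kl orbT.
have msk : m * (s * k) < n by apply: leq_ltn_trans ml; rewrite leq_mul2l sk orbT.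
set e := ceil_log2_ratio l.+1 k.
set c := ceil_div l.+1 k.
have ce : c = (l + k) %/ k by rewrite /c /ceil_div; congr divn; lia.
have he1 : l < k * 2 ^ e.
  have h1 : c <= 2 ^ e by apply: up_logP.
  have h2 : l + k < c.+1 * k by rewrite ce; apply: ltn_ceil.
  have h3 : k * c <= k * 2 ^ e by rewrite leq_mul2l h1 orbT.
  rewrite mulSn mulnC in h2; lia.
have he2 : 0 < e -> k * 2 ^ e.-1 <= l.
  move=> e0; have c1 : 1 < c.
    by move: e0; rewrite /e /ceil_log2_ratio up_log_gt0 => /andP [].
  have h1 : 2 ^ e.-1 < c by apply: up_log_gtn.
  have h2 : c * k <= l + k by rewrite ce leq_trunc_div.
  have h3 : k * (2 ^ e.-1).+1 <= k * c by rewrite leq_mul2l h1 orbT.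
  rewrite mulnS mulnC in h3; lia.
have per := f_period n0 m2 mn k0 he1.
have cfg : cancel f finv := cancel_fg n0 m2 mn k0.
split.
  split; first by rewrite expn_gt0.
  split; first exact: per.
  move=> r /andP [r0 rlt] Hr.
  have e0 : 0 < e by case: e rlt r0 {he1 he2 per} => //= ? ?; lia.
  have Hg := iter_gcd Hr per.
  have : gcdn r (2 ^ e) %| 2 ^ e by apply: dvdn_gcdr.
  case/(dvdn_pfactor _ _ (isT : prime 2)) => w we gw.
  have wlt : w < e.
    rewrite ltn_neqAle we andbT; apply/eqP => ew.
    have := dvdn_leq r0 (dvdn_gcdl r (2 ^ e)); rewrite gw ew; lia.
  have H : iter (2 ^ e.-1) f =1 id.
    have -> : 2 ^ e.-1 = 2 ^ (e.-1 - w) * 2 ^ w by rewrite -expnD subnK //; lia.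
    by apply: iter_mul; rewrite -gw.
  have [x Hx] := f_not_period n0 m2 mn k0 (he2 e0).
  exact: Hx (H x).
split; first exact: cfg.
split.
  move=> x; have := per x; rewrite -(prednK (expn_gt0 2 e)) iterS => Ex.
  by rewrite -{1}Ex cfg.
split; first exact: alg_deg_f.
by rewrite -mulnA; apply: alg_deg_sum.
Qed.
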